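(* In the multiple zeta setting, $\mathfrak{h}^0[t]$ is closed under the $t$-harmonic product $\star_t$, and $Z^t=Z\circ S^t\colon(\mathfrak{h}^0[t],\star_t)\to\mathbb{R}[t]$ is a $\mathbb{Q}[t]$-algebra homomorphism.
   Context: Multiple zeta setting: $A=\{z_k\mid k=1,2,\ldots\}$, $\mathfrak{h}^1$ is the non-commutative polynomial algebra over $\mathbb{Q}$ in the letters $z_k$ (words are finite sequences of letters, $1$ the empty word), and $\mathfrak{z}$ its $\mathbb{Q}$-span of letters with product $z_k\circ z_l=z_{k+l}$, acting on $\mathfrak{h}^1$ by $a\circ 1=0$, $a\circ(bw)=(a\circ b)w$ ($a,b$ letters, $w$ a word), extended bilinearly. Let $\mathfrak{h}^0=\mathbb{Q}\oplus\bigoplus_{k\geq 2}z_k\mathfrak{h}^1$. Let $Z\colon\mathfrak{h}^0[t]\to\mathbb{R}[t]$ be the $\mathbb{Q}[t]$-linear map with $Z(1)=1$ and $Z(z_{k_1}\cdots z_{k_n})=\zeta(k_1,\ldots,k_n)=\sum_{m_1>\cdots>m_n>0}m_1^{-k_1}\cdots m_n^{-k_n}$ ($k_1\ge2$). The $\mathbb{Q}[t]$-linear operator $S^t$ on $\mathfrak{h}^1[t]$ is given by $S^t(1)=1$, $S^t(aw)=aS^t(w)+t\,a\circ S^t(w)$. The $t$-harmonic product $\star_t$ on $\mathfrak{h}^1[t]$ is the $\mathbb{Q}[t]$-bilinear product with $1\star_t w=w\star_t 1=w$ and $(aw)\star_t(bw')=a(w\star_t bw')+b(aw\star_t w')+(1-2t)(a\circ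 b)(w\star_t w')+(t^2-t)(a\circ b)\circ(w\star_t w')$ for letters $a,b$ and words $w,w'$. *)

(* Defs.v *)
From HB Require Import structures.
From mathcomp Require Import all_boot all_order all_algebra.
From Stdlib Require Import Reals ClassicalEpsilon.
Set Implicit Arguments. Unset Strict Implicit. Unset Printing Implicit Defensive.
Import GRing.Theory.
Local Open Scope ring_scope.

(** Words: a word z_{k1}...z_{kn} is the list [:: k1; ...; kn] of letter
    indices (letters of A are z_k, k >= 1; lists containing 0 are never
    produced from elements of h^1 and are excluded by the h^0 predicate). *)
Definition word := seq nat.

Definition Qt := {poly rat}.

(** Elements of h^1[t] are represented as formal finite sums
    sum_i c_i w_i, i.e. lists of (coefficient in Q[t], word). *)
Definition H := seq (Qt * word).

Definition coefH (u : H) (w : word) : Qt := \sum_(p <- u | p.2 == w) p.1.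

Definition oneH : H := [:: (1, [::])].
Definition addH (u v : H) : H := u ++ v.
Definition scaleH (a : Qt) (u : H) : H := [seq (a * p.1, p.2) | p <- u].
Definition lconsH (k : nat) (u : H) : H := [seq (p.1, k :: p.2) | p <- u].
Definition circH (k : nat) (u : H) : H :=
  flatten [seq (match p.2 with
                | [::] => [::]
                | l :: w => [:: (p.1, addn k l :: w)]
                end) | p <- u].

Fixpoint St_word (w : word) : H :=
  match w with
  | [::] => oneH
  | k :: w' => addH (lconsH k (St_word w')) (scaleH 'X (circH k (St_word w')))
  end.
Definition St (u : H) : H := flatten [seq scaleH p.1 (St_word p.2) | p <- u].

Fixpoint star_word (u : word) : word -> H :=
  match u with
  | [::] => fun v => [:: (1, v)]
  | a :: w =>
      fix g (v : word) : H :=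
        match v with
        | [::] => [:: (1, a :: w)]
        | b :: w' =>
            addH (lconsH a (star_word w v))
           (addH (lconsH b (g w'))
           (addH (scaleH (1 - 'X *+ 2) (lconsH (addn a b) (star_word w w')))
                 (scaleH ('X ^+ 2 - 'X) (circH (addn a b) (star_word w w')))))
        end
  end.
Definition starH (u v : H) : H :=
  flatten [seq flatten [seq scaleH (p.1 * q.1) (star_word p.2 q.2) | q <- v] | p <- u].

(** h^0 = Q + sum_{k>=2} z_k h^1 : admissible words *)
Definition adm (w : word) : bool :=
  match w with
  | [::] => true
  | k :: w' => leq 2 k && all (fun l : nat => leq 1 l) w'
  end.
Definition inh0 (u : H) : Prop := forall w, ~~ adm w -> coefH u w = 0.

Definition int2R (z : int) : R :=
  match z with Posz n => INR n | Negz n => Ropp (INR (S n)) end.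
Definition ratR (q : rat) : R := Rdiv (int2R (numq q)) (int2R (denq q)).

(** truncated multiple zeta sums:
    zeta_tr w N = sum_{N >= m1 > ... > mn > 0} m1^-k1 ... mn^-kn *)
Fixpoint zeta_tr (w : word) : nat -> R :=
  match w with
  | [::] => fun _ => R1
  | k :: w' =>
      fix g (N : nat) : R :=
        match N with
        | O => R0
        | S M => Rplus (g M) (Rmult (Rinv (pow (INR (S M)) k)) (zeta_tr w' M))
        end
  end.

Definition mzv (w : word) : R :=
  epsilon (inhabits R0) (fun l => Un_cv (zeta_tr w) l).

(** R[t] represented by coefficient sequences (coefficient of t^n) *)
Definition Rt := nat -> R.
Definition Rt1 : Rt := fun n => if n is O then R1 else R0.
Definition Rtmul (f g : Rt) : Rt := fun n => sum_f_R0 (fun i => Rmult (f i) (g (subn n i))) n.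
Definition Rtadd (f g : Rt) : Rt := fun n => Rplus (f n) (g n).
Definition QtR (a : Qt) : Rt := fun n => ratR (nth 0 (polyseq a) n).

(** Z : h^0[t] -> R[t], Q[t]-linear with Z(w) = zeta(w)
    (on inadmissible words a junk value is used; it never contributes for
    arguments in h^0[t]). *)
Definition Zmap (u : H) : Rt :=
  fun n => foldr (fun p acc => Rplus (Rmult (ratR (nth 0 (polyseq p.1) n)) (mzv p.2)) acc) R0 u.

Definition Zt (u : H) : Rt := Zmap (St u).

(* Main.v *)
Require Import Defs.
From Stdlib Require Import Reals Lra Lia Psatz ClassicalEpsilon FunctionalExtensionality.
From Stdlib Require List.

Module PartA.
Import List.
Local Open Scope list_scope. Local Open Scope R_scope.


Lemma zeta_cons_S k w N : zeta_tr (k::w) (S N) = zeta_tr (k::w) N + / (INR (S N)) ^ k * zeta_tr w N.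
Proof. reflexivity. Qed.

Lemma zeta_cons_0 k w : zeta_tr (k::w) 0 = 0.
Proof. reflexivity. Qed.

Lemma inv_pow_pos N k : 0 < / INR (S N) ^ k.
Proof. apply Rinv_0_lt_compat, pow_lt. rewrite S_INR. pose proof (pos_INR N). lra. Qed.

Lemma zeta_nn w N : 0 <= zeta_tr w N.
Proof.
  revert N; induction w as [|k w IH]; intro N; [simpl; lra|].
  induction N as [|N IHN]; [rewrite zeta_cons_0; lra|].
  rewrite zeta_cons_S. pose proof (inv_pow_pos N k). pose proof (IH N). nra.
Qed.

Lemma zeta_grow w N : zeta_tr w N <= zeta_tr w (S N).
Proof.
  destruct w as [|k w]; [simpl; lra|].
  rewrite zeta_cons_S. pose proof (inv_pow_pos N k). pose proof (zeta_nn w N). nra.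
Qed.

Lemma inv_pow_le N k : (2 <= k)%nat -> / INR (S N) ^ k <= / INR (S N) ^ 2.
Proof.
  intro Hk. apply Rinv_le_contravar. apply pow_lt. rewrite S_INR; pose proof (pos_INR N); lra.
  apply Rle_pow; [rewrite S_INR; pose proof (pos_INR N); lra| exact Hk].
Qed.

Lemma zeta_mono_k k w N : (2 <= k)%nat -> zeta_tr (k::w) N <= zeta_tr (2%nat::w) N.
Proof.
  intro Hk. induction N as [|N IHN]; [simpl; lra|].
  rewrite !zeta_cons_S. pose proof (inv_pow_le N k Hk). pose proof (zeta_nn w N). nra.
Qed.

Lemma ineq_key x : 0 < x -> / (x+1) ^ 2 + / (x+1) <= / x.
Proof.
  intro Hx.
  assert (H1 : / (x+1)^2 + / (x+1) = (x + 2) / ((x+1)^2)) by (field; lra).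
  rewrite H1. apply (Rmult_le_reg_r (x * (x+1)^2)). nra.
  replace ((x + 2) / (x + 1) ^ 2 * (x * (x + 1) ^ 2)) with ((x+2)*x) by (field; lra).
  replace (/ x * (x * (x + 1) ^ 2)) with ((x+1)^2) by (field; lra). nra.
Qed.

Lemma zeta2_bound N : zeta_tr (2%nat::nil) (S N) + / INR (S N) <= 2.
Proof.
  induction N as [|N IHN].
  - rewrite zeta_cons_S, zeta_cons_0. simpl. rewrite Rmult_1_r, Rinv_1. lra.
  - rewrite zeta_cons_S. simpl (zeta_tr nil N).
    pose proof (ineq_key (INR (S N))). rewrite (S_INR (S N)).
    assert (0 < INR (S N)) by (rewrite S_INR; pose proof (pos_INR N); lra).
    specialize (H H0). change (zeta_tr nil (S N)) with 1. rewrite Rmult_1_r. lra.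
Qed.

Lemma key_claim l w N : (1 <= l)%nat ->
  zeta_tr (2%nat :: l :: w) N + zeta_tr (l :: w) N * / INR N <= zeta_tr (S l :: w) N.
Proof.
  intro Hl. induction N as [|N IHN].
  - simpl. lra.
  - rewrite !zeta_cons_S.
    set (A := zeta_tr (l :: w) N). set (C := zeta_tr (2%nat :: l :: w) N). set (B := zeta_tr (S l :: w) N).
    set (a := / INR (S N) ^ l * zeta_tr w N).
    assert (HA : 0 <= A) by apply zeta_nn.
    assert (Ha : 0 <= a) by (pose proof (inv_pow_pos N l); pose proof (zeta_nn w N); unfold a; nra).
    assert (Hb : / INR (S N) ^ S l * zeta_tr w N = a * / INR (S N)).
    { unfold a. simpl. rewrite Rinv_mult. ring. }
    rewrite Hb. rewrite S_INR.
    assert (Hz : / (INR N + 1) ^ 2 * A + A * / (INR N + 1) <= A * / INR N).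
    { destruct N as [|N'].
      - unfold A; simpl. lra.
      - pose proof (ineq_key (INR (S N'))). assert (0 < INR (S N')) by (rewrite S_INR; pose proof (pos_INR N'); lra).
        specialize (H H0). nra. }
    rewrite Rmult_plus_distr_r.
    set (p := / (INR N + 1) ^ 2 * A) in *. set (q := A * / (INR N + 1)) in *.
    set (r := a * / (INR N + 1)) in *. set (s := A * / INR N) in *. assert (C + s <= B) by exact IHN. lra.
Qed.

Lemma inv_INR_nn N : 0 <= / INR N.
Proof. destruct N. simpl. rewrite Rinv_0. lra. left. apply Rinv_0_lt_compat. rewrite S_INR; pose proof (pos_INR N); lra. Qed.

Lemma zeta_bound w : forall k, (2<=k)%nat -> Forall (fun l => (1<=l)%nat) w -> forall N, zeta_tr (k::w) N <= 2.
Proof.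
  induction w as [|l w IH]; intros k Hk Hw N.
  - eapply Rle_trans. apply zeta_mono_k; exact Hk.
    destruct N. simpl; lra. pose proof (zeta2_bound N). pose proof (inv_INR_nn (S N)). lra.
  - pose proof (Forall_inv Hw) as Hl. pose proof (Forall_inv_tail Hw) as Hw'. simpl in Hl.
    eapply Rle_trans. apply zeta_mono_k; exact Hk.
    pose proof (key_claim l w N Hl). pose proof (zeta_nn (l::w) N). pose proof (inv_INR_nn N).
    assert (0 <= zeta_tr (l :: w) N * / INR N) by (apply Rmult_le_pos; assumption).
    pose proof (IH (S l) ltac:(lia) Hw' N). lra.
Qed.

Lemma mzv_spec w : (exists l, Un_cv (zeta_tr w) l) -> Un_cv (zeta_tr w) (mzv w).
Proof. intro H. unfold mzv. apply epsilon_spec. exact H. Qed.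

Lemma zeta_cv w k : (2<=k)%nat -> Forall (fun l => (1<=l)%nat) w -> Un_cv (zeta_tr (k::w)) (mzv (k::w)).
Proof.
  intros Hk Hw. apply mzv_spec.
  destruct (growing_cv (zeta_tr (k::w))) as [l Hl].
  - intro N. apply zeta_grow.
  - exists 2. intros x [N ->]. apply (zeta_bound w k Hk Hw N).
  - exists l; exact Hl.
Qed.

Lemma zeta_cv_nil : Un_cv (zeta_tr nil) (mzv nil).
Proof. apply mzv_spec. exists 1. intros e He. exists 0%nat. intros n _. simpl. unfold R_dist. rewrite Rminus_diag, Rabs_R0. exact He. Qed.

Lemma mzv_nil : mzv nil = 1.
Proof.
  apply (UL_sequence (zeta_tr nil)). apply zeta_cv_nil.
  intros e He. exists 0%nat. intros n _. simpl. unfold R_dist. rewrite Rminus_diag, Rabs_R0. exact He.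
Qed.

End PartA.
Import PartA.

From mathcomp Require Import all_boot all_order all_algebra.
From Stdlib Require Import Reals.
From mathcomp Require Import Rstruct ring.
Set Implicit Arguments. Unset Strict Implicit. Unset Printing Implicit Defensive.
Import GRing.Theory Num.Theory.
Local Open Scope ring_scope.


Lemma int2R_E z : int2R z = z%:~R.
Proof. case: z => n; rewrite /int2R; first by rewrite INRE. by rewrite NegzE mulrNz INRE. Qed.

Lemma ratR_E q : ratR q = ratr q.
Proof. by rewrite /ratR !int2R_E RdivE. Qed.

Definition mp (a : Qt) : {poly R} := map_poly (@ratr R) a.

Lemma mpM a b : mp (a * b) = mp a * mp b. Proof. by rewrite /mp rmorphM. Qed.
Lemma mpX : mp 'X = 'X. Proof. by rewrite /mp map_polyX. Qed.
Lemma mp1 : mp 1 = 1. Proof. by rewrite /mp rmorph1. Qed.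


Lemma star_cons a w b w' : star_word (a::w) (b::w') =
  addH (lconsH a (star_word w (b::w')))
    (addH (lconsH b (star_word (a::w) w'))
      (addH (scaleH (1 - 'X *+ 2) (lconsH (a + b) (star_word w w')))
            (scaleH ('X^2 - 'X) (circH (a + b) (star_word w w'))))).
Proof. by []. Qed.

Definition c (k M : nat) : R := Rinv (pow (INR M.+1) k).

Lemma c_add k l M : c (k + l) M = c k M * c l M.
Proof. by rewrite /c pow_add Rinv_mult. Qed.

Definition ZNP (u : H) (N : nat) : {poly R} := \sum_(p <- u) mp p.1 * (zeta_tr p.2 N)%:P.
Definition ZP (u : H) : {poly R} := \sum_(p <- u) mp p.1 * (mzv p.2)%:P.

Definition Dop k (f : nat -> {poly R}) N := \sum_(M < N) (c k M)%:P * f M.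
Definition Eop k (f : nat -> {poly R}) N := \sum_(M < N) (c k M)%:P * (f M.+1 - f M).
Definition Top k (f : nat -> {poly R}) N := \sum_(M < N) (c k M)%:P * ((1 - 'X) * f M + 'X * f M.+1).

Lemma TopS k f N : Top k f N.+1 = Top k f N + (c k N)%:P * ((1 - 'X) * f N + 'X * f N.+1).
Proof. by rewrite /Top big_ord_recr. Qed.
Lemma EopS k f N : Eop k f N.+1 = Eop k f N + (c k N)%:P * (f N.+1 - f N).
Proof. by rewrite /Eop big_ord_recr. Qed.
Lemma DopS k f N : Dop k f N.+1 = Dop k f N + (c k N)%:P * f N.
Proof. by rewrite /Dop big_ord_recr. Qed.
Lemma Top0 k f : Top k f 0 = 0. Proof. by rewrite /Top big_ord0. Qed.
Lemma Eop0 k f : Eop k f 0 = 0. Proof. by rewrite /Eop big_ord0. Qed.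
Lemma Dop0 k f : Dop k f 0 = 0. Proof. by rewrite /Dop big_ord0. Qed.

Lemma Top_prod a b f g N :
  Top a (fun M => f M * Top b g M) N + Top b (fun M => Top a f M * g M) N
  + (1 - 'X *+ 2) * Top (a + b) (fun M => f M * g M) N
  + ('X^2 - 'X) * Eop (a + b) (fun M => f M * g M) N = Top a f N * Top b g N.
Proof.
elim: N => [|N IH]; first by rewrite !Top0 Eop0 !(mulr0, mul0r, addr0).
rewrite !TopS !EopS c_add polyCM /=.
move: IH.
set T1 := Top a _ N. set T2 := Top b _ N. set T3 := Top (a + b) _ N.
set T4 := Eop (a + b) _ N. set Ta := Top a f N. set Tb := Top b g N.
move=> IH. rewrite (_ : T1 = Ta * Tb - (T2 + (1 - 'X *+ 2) * T3 + ('X^2 - 'X) * T4)); last by rewrite -IH; ring.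
ring.
Qed.

Lemma ZNP_cat u v N : ZNP (u ++ v) N = ZNP u N + ZNP v N.
Proof. by rewrite /ZNP big_cat. Qed.

Lemma ZNP_scale a u N : ZNP (scaleH a u) N = mp a * ZNP u N.
Proof. rewrite /ZNP big_map big_distrr; apply: eq_bigr => p _ /=. by rewrite mpM mulrA. Qed.

Lemma ZNP_flatten L N : ZNP (flatten L) N = \sum_(x <- L) ZNP x N.
Proof. by rewrite /ZNP big_flatten. Qed.

Lemma zeta_consE k w N : zeta_tr (k::w) N = \sum_(M < N) c k M * zeta_tr w M.
Proof.
elim: N => [|N IH]; first by rewrite big_ord0.
by rewrite big_ord_recr /= -IH.
Qed.

Lemma Dop_sum k (s : H) (F : Qt * word -> nat -> {poly R}) N :
  Dop k (fun M => \sum_(p <- s) mp p.1 * F p M) N = \sum_(p <- s) mp p.1 * Dop k (F p) N.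
Proof.
rewrite /Dop. under eq_bigr do rewrite big_distrr. rewrite exchange_big /=.
apply: eq_bigr => p _. rewrite big_distrr. apply: eq_bigr => M _ /=. by rewrite mulrCA.
Qed.

Lemma Eop_sum k (s : H) (F : Qt * word -> nat -> {poly R}) N :
  Eop k (fun M => \sum_(p <- s) mp p.1 * F p M) N = \sum_(p <- s) mp p.1 * Eop k (F p) N.
Proof.
rewrite /Eop. under eq_bigr do rewrite -sumrB big_distrr. rewrite exchange_big /=.
apply: eq_bigr => p _. rewrite big_distrr. apply: eq_bigr => M _ /=. by rewrite -mulrBr mulrCA.
Qed.

Lemma Top_DE k f N : Top k f N = Dop k f N + 'X * Eop k f N.
Proof.
rewrite /Top /Dop /Eop big_distrr -big_split. apply: eq_bigr => M _ /=. ring.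
Qed.

Lemma Top_sum k (s : H) (F : Qt * word -> nat -> {poly R}) N :
  Top k (fun M => \sum_(p <- s) mp p.1 * F p M) N = \sum_(p <- s) mp p.1 * Top k (F p) N.
Proof.
rewrite Top_DE Dop_sum Eop_sum big_distrr -big_split. apply: eq_bigr => p _ /=.
rewrite Top_DE. ring.
Qed.

Lemma ZNP_lcons k u N : ZNP (lconsH k u) N = Dop k (ZNP u) N.
Proof.
rewrite /ZNP big_map (Dop_sum k u (fun p M => (zeta_tr p.2 M)%:P)).
apply: eq_bigr => -[a w] _. change (mp a * (zeta_tr (k :: w) N)%:P = mp a * Dop k (fun M => (zeta_tr w M)%:P) N).
rewrite zeta_consE rmorph_sum /Dop; congr (_ * _).
apply: eq_bigr => M _ /=. by rewrite polyCM.
Qed.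

Lemma ZNP_circ k u N : ZNP (circH k u) N = Eop k (ZNP u) N.
Proof.
rewrite /circH ZNP_flatten big_map /ZNP (Eop_sum k u (fun p M => (zeta_tr p.2 M)%:P)). apply: eq_bigr => [[a w]] _ /=.
case: w => [|l w].
  rewrite big_nil /Eop big1 ?mulr0 // => M _. by rewrite subrr mulr0.
rewrite big_cons big_nil addr0 /Eop big_distrr.
change (mp a * (zeta_tr (addn k l :: w) N)%:P = \sum_(i < N) mp a * ((c k i)%:P * ((zeta_tr (l :: w) i.+1)%:P - (zeta_tr (l :: w) i)%:P))).
rewrite zeta_consE rmorph_sum big_distrr.
apply: eq_bigr => M _. rewrite -rmorphB.
have -> : zeta_tr (l :: w) M.+1 - zeta_tr (l :: w) M = c l M * zeta_tr w M.
  by rewrite zeta_cons_S addrAC subrr add0r.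
rewrite c_add /= !rmorphM /=. ring.
Qed.

Definition Gw (w : word) : nat -> {poly R} := fun N => ZNP (St_word w) N.
Definition Phi (X : H) : nat -> {poly R} := fun N => ZNP (St X) N.

Lemma Gw_nil : Gw [::] = fun _ => 1.
Proof.
apply: functional_extensionality => N.
by rewrite /Gw /= /ZNP big_cons big_nil addr0 mp1 mul1r.
Qed.

Lemma Gw_cons k w : Gw (k :: w) = Top k (Gw w).
Proof.
apply: functional_extensionality => N.
by rewrite /Gw /= /addH ZNP_cat ZNP_scale mpX ZNP_lcons ZNP_circ Top_DE.
Qed.

Lemma Phi_E X N : Phi X N = \sum_(p <- X) mp p.1 * Gw p.2 N.
Proof.
rewrite /Phi /St ZNP_flatten big_map. apply: eq_bigr => p _. by rewrite ZNP_scale.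
Qed.

Lemma Phi_cat X Y N : Phi (X ++ Y) N = Phi X N + Phi Y N.
Proof. by rewrite !Phi_E big_cat. Qed.

Lemma Phi_scale a X N : Phi (scaleH a X) N = mp a * Phi X N.
Proof.
rewrite !Phi_E big_map big_distrr. apply: eq_bigr => p _ /=. by rewrite mpM mulrA.
Qed.

Lemma Phi_lcons k X : Phi (lconsH k X) = Top k (Phi X).
Proof.
apply: functional_extensionality => N.
rewrite Phi_E big_map.
have -> : Phi X = fun M => \sum_(p <- X) mp p.1 * Gw p.2 M.
  by apply: functional_extensionality => M; rewrite Phi_E.
rewrite (Top_sum k X (fun p M => Gw p.2 M)). apply: eq_bigr => -[a w] _.
by rewrite /= Gw_cons.
Qed.

Lemma Eop_Top k l f N : Eop k (Top l f) N = Top (k + l) f N.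
Proof.
elim: N => [|N IH]; first by rewrite Eop0 Top0.
rewrite EopS TopS IH TopS addrAC subrr add0r c_add polyCM. ring.
Qed.

Lemma Phi_circ k X : Phi (circH k X) = Eop k (Phi X).
Proof.
apply: functional_extensionality => N.
have -> : Phi X = fun M => \sum_(p <- X) mp p.1 * Gw p.2 M.
  by apply: functional_extensionality => M; rewrite Phi_E.
rewrite (Eop_sum k X (fun p M => Gw p.2 M)) Phi_E /circH big_flatten big_map.
apply: eq_bigr => -[a w] _. case: w => [|l w] /=.
  rewrite big_nil Gw_nil /Eop big1 ?mulr0 // => M _. by rewrite subrr mulr0.
by rewrite big_cons big_nil addr0 /= !Gw_cons Eop_Top.
Qed.

Lemma mpA : mp (1 - 'X *+ 2) = 1 - 'X *+ 2.
Proof. rewrite /mp rmorphB rmorph1 rmorphMn. change (1 - mp 'X *+ 2 = 1 - 'X *+ 2). by rewrite mpX. Qed.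
Lemma mpB : mp ('X^2 - 'X) = 'X^2 - 'X.
Proof. rewrite /mp rmorphB rmorphXn. change (mp 'X ^+ 2 - mp 'X = 'X^2 - 'X). by rewrite mpX. Qed.

Lemma Phi_star u : forall v, Phi (star_word u v) = fun N => Gw u N * Gw v N.
Proof.
elim: u => [|a w IHu] v.
  apply: functional_extensionality => N.
  by rewrite Phi_E /= big_cons big_nil addr0 mp1 mul1r Gw_nil mul1r.
elim: v => [|b w' IHv].
  apply: functional_extensionality => N.
  by rewrite Phi_E /= big_cons big_nil addr0 mp1 mul1r Gw_nil mulr1.
apply: functional_extensionality => N.
rewrite star_cons /addH !Phi_cat !Phi_scale !Phi_lcons Phi_circ IHv !IHu !Gw_cons.
rewrite mpA mpB.
rewrite -Top_prod. ring.
Qed.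

Lemma Phi_flatten L N : Phi (flatten L) N = \sum_(x <- L) Phi x N.
Proof. rewrite Phi_E big_flatten. apply: eq_bigr => x _. by rewrite Phi_E. Qed.

Lemma Phi_starH u v N : Phi (starH u v) N = Phi u N * Phi v N.
Proof.
rewrite /starH Phi_flatten big_map (Phi_E u) big_distrl. apply: eq_bigr => p _.
rewrite Phi_flatten big_map (Phi_E v) big_distrr. apply: eq_bigr => q _.
rewrite Phi_scale Phi_star mpM /=. ring.
Qed.

Lemma Phi_one N : Phi oneH N = 1.
Proof. by rewrite Phi_E big_cons big_nil addr0 mp1 mul1r Gw_nil. Qed.

Lemma coef_mp a i : (mp a)`_i = ratr (a`_i).
Proof. by rewrite /mp coef_map. Qed.

Lemma Zmap_E u n : Zmap u n = (ZP u)`_n.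
Proof.
rewrite /Zmap /ZP. elim: u => [|p u IH]; first by rewrite big_nil coef0.
by rewrite big_cons /= IH coefD coefMC coef_mp ratR_E.
Qed.

Lemma ZP_cat u v : ZP (u ++ v) = ZP u + ZP v.
Proof. by rewrite /ZP big_cat. Qed.
Lemma ZP_scale a u : ZP (scaleH a u) = mp a * ZP u.
Proof. rewrite /ZP big_map big_distrr; apply: eq_bigr => p _ /=. by rewrite mpM mulrA. Qed.
Lemma ZP_flatten L : ZP (flatten L) = \sum_(x <- L) ZP x.
Proof. by rewrite /ZP big_flatten. Qed.

Lemma ZP_St_cat X Y : ZP (St (X ++ Y)) = ZP (St X) + ZP (St Y).
Proof. by rewrite /St map_cat flatten_cat ZP_cat. Qed.
Lemma ZP_St_scale a X : ZP (St (scaleH a X)) = mp a * ZP (St X).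
Proof.
rewrite /St !ZP_flatten !big_map big_distrr. apply: eq_bigr => p _ /=.
by rewrite !ZP_scale mpM mulrA.
Qed.

Lemma sum_f_R0_big (f : nat -> R) n : sum_f_R0 f n = \sum_(i < n.+1) f i.
Proof.
elim: n => [|n IH]; first by rewrite big_ord_recr big_ord0 /= add0r.
by rewrite big_ord_recr /= -IH.
Qed.

Lemma Rtmul_E (P Q : {poly R}) n : Rtmul (fun i => P`_i) (fun i => Q`_i) n = (P * Q)`_n.
Proof. by rewrite /Rtmul sum_f_R0_big coefM. Qed.

Lemma QtR_E a : QtR a = fun i => (mp a)`_i.
Proof. apply: functional_extensionality => i. by rewrite /QtR coef_mp ratR_E. Qed.

Lemma Zt_E X : Zt X = fun n => (ZP (St X))`_n.
Proof. apply: functional_extensionality => n. by rewrite /Zt Zmap_E. Qed.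

Lemma part4 (a b : Qt) (u v : H) n :
  Zt (addH (scaleH a u) (scaleH b v)) n
  = Rtadd (Rtmul (QtR a) (Zt u)) (Rtmul (QtR b) (Zt v)) n.
Proof.
rewrite /Rtadd !Zt_E !QtR_E !Rtmul_E /addH ZP_St_cat !ZP_St_scale coefD. by [].
Qed.

Lemma part3 n : Zt oneH n = Rt1 n.
Proof.
rewrite Zt_E /= /St /= /ZP big_cons big_nil addr0 mulr1 mp1 mzv_nil mul1r coefC.
by case: n.
Qed.

Lemma coefH_cons p u w : coefH (p :: u) w = (if p.2 == w then p.1 else 0) + coefH u w.
Proof. rewrite /coefH big_cons. by case: ifP; rewrite ?add0r. Qed.

Section Group.
Variable V : zmodType.
Variable G : Qt -> word -> V.
Hypothesis G0 : forall w, G 0 w = 0.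
Hypothesis GD : forall a b w, G (a + b) w = G a w + G b w.

Lemma sum_group (u : H) (s : seq word) : uniq s -> {subset [seq p.2 | p <- u] <= s} ->
  \sum_(p <- u) G p.1 p.2 = \sum_(w <- s) G (coefH u w) w.
Proof.
move=> us; elim: u => [|p u IH] sub.
  rewrite big_nil big1_seq // => w _. by rewrite /coefH big_nil G0.
rewrite big_cons IH; last by move=> x hx; apply: sub; rewrite /= inE hx orbT.
under [RHS]eq_bigr do rewrite coefH_cons GD.
rewrite big_split /=. congr (_ + _).
have ps : p.2 \in s by apply: sub; rewrite /= inE eqxx.
rewrite (bigID (fun w => p.2 == w)) /=.
rewrite [X in _ = _ + X]big1 ?addr0; last by move=> w /negbTE ->; rewrite G0.
rewrite -big_filter.
have -> : [seq w <- s | p.2 == w] = [:: p.2].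
  rewrite (_ : (fun w => p.2 == w) = pred1 p.2); last first.
    by apply: functional_extensionality => w; rewrite eq_sym.
  by rewrite filter_pred1_uniq.
by rewrite big_cons big_nil eqxx addr0.
Qed.

Lemma sum_coef_eq (u u' : H) : (forall w, coefH u w = coefH u' w) ->
  \sum_(p <- u) G p.1 p.2 = \sum_(p <- u') G p.1 p.2.
Proof.
move=> e. set s := undup [seq p.2 | p <- u ++ u'].
have us : uniq s by apply: undup_uniq.
rewrite (@sum_group u s us); last by move=> x hx; rewrite mem_undup map_cat mem_cat hx.
rewrite (@sum_group u' s us); last by move=> x hx; rewrite mem_undup map_cat mem_cat hx orbT.
apply: eq_bigr => w _. by rewrite e.
Qed.
End Group.

Definition fadm (u : H) : H := [seq p <- u | adm p.2].

Lemma coef_fadm u : inh0 u -> forall w, coefH u w = coefH (fadm u) w.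
Proof.
move=> hu w. rewrite /coefH /fadm big_filter_cond /=.
case: (boolP (adm w)) => aw.
  apply: eq_bigl => p. case: eqP => [->|_]; by rewrite ?aw ?andbF.
rewrite [RHS]big_pred0; first exact: (hu w aw).
move=> p. case: eqP => [->|_]; by rewrite ?(negbTE aw) ?andbF.
Qed.

Definition allA (u : H) := all (fun p => adm p.2) u.

Lemma allA_inh0 u : allA u -> inh0 u.
Proof.
move=> hu w nw. rewrite /coefH big_seq_cond big_pred0 // => p.
apply/negbTE/negP => /andP [pu /eqP e]. move/allP: hu => /(_ p pu). by rewrite e (negbTE nw).
Qed.

Lemma fadm_allA u : allA (fadm u).
Proof. by rewrite /allA /fadm all_filter; apply/allP => p _; apply/implyP. Qed.

Definition pos (w : word) := all (fun l : nat => leq 1 l) w.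
Definition allW (Q : word -> bool) (X : H) := all (fun p => Q p.2) X.

Lemma allW_cat Q X Y : allW Q (X ++ Y) = allW Q X && allW Q Y.
Proof. by rewrite /allW all_cat. Qed.
Lemma allW_scale Q a X : allW Q (scaleH a X) = allW Q X.
Proof. by rewrite /allW /scaleH all_map. Qed.
Lemma allW_lcons Q k X : allW Q (lconsH k X) = allW (fun w => Q (k :: w)) X.
Proof. by rewrite /allW /lconsH all_map. Qed.
Lemma allW_circ Q k X :
  allW (fun w => if w is l :: w' then Q (addn k l :: w') else true) X -> allW Q (circH k X).
Proof.
elim: X => [|[a w] X IH] //. rewrite {1}/allW /= => /andP [h1 h2].
case: w h1 => [|l w] h1; first exact: IH h2.
rewrite /allW /= h1 /=. exact: IH h2.
Qed.
Lemma allW_impl (Q Q' : word -> bool) X : (forall w, Q w -> Q' w) -> allW Q X -> allW Q' X.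
Proof. move=> h /allP hX. apply/allP => p /hX. exact: h. Qed.

Lemma St_pos w : pos w -> allW pos (St_word w).
Proof.
elim: w => [|k w IH] //= /andP [hk hw].
rewrite /addH allW_cat allW_scale allW_lcons. apply/andP; split.
  by apply: (allW_impl _ (IH hw)) => v hv /=; rewrite hk.
apply: allW_circ. apply: (allW_impl _ (IH hw)) => -[|l v] // /andP [_ hv].
apply/andP; split; last exact: hv. by rewrite addn_gt0 hk.
Qed.

Lemma St_adm w : adm w -> allA (St_word w).
Proof.
case: w => [|k w] // /andP [hk hw].
change (allW adm (addH (lconsH k (St_word w)) (scaleH 'X (circH k (St_word w))))).
rewrite /addH allW_cat allW_scale allW_lcons. apply/andP; split.
  by apply: (allW_impl _ (St_pos hw)) => v hv /=; rewrite hk.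
apply: allW_circ. apply: (allW_impl _ (St_pos hw)) => -[|l v] // /andP [hl hv].
apply/andP; split; last exact: hv. by rewrite (leq_trans hk) // leq_addr.
Qed.

Lemma star_pos u : forall v, pos u -> pos v -> allW pos (star_word u v).
Proof.
elim: u => [|a w IHu] v; first by move=> _ hv; change (pos v && true); rewrite hv.
elim: v => [|b w' IHv]; first by move=> hu _; change (pos (a::w) && true); rewrite hu.
move=> hu hv. have /andP [ha hw] := hu. have /andP [hb hw'] := hv.
rewrite star_cons /addH !allW_cat !allW_scale !allW_lcons.
apply/and4P; split.
- by apply: (allW_impl _ (IHu _ hw hv)) => x hx /=; rewrite ha.
- by apply: (allW_impl _ (IHv hu hw')) => x hx /=; rewrite hb.
- by apply: (allW_impl _ (IHu _ hw hw')) => x hx; apply/andP; split; [by rewrite addn_gt0 ha | exact: hx].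
- apply: allW_circ. apply: (allW_impl _ (IHu _ hw hw')) => -[|l x] // /andP [_ hx].
  apply/andP; split; last exact: hx. by rewrite !addn_gt0 ha.
Qed.

Lemma star_adm u v : adm u -> adm v -> allA (star_word u v).
Proof.
case: u => [|a w]; first by move=> _ hv; change (adm v && true); rewrite hv.
case: v => [|b w']; first by move=> hu _; change (adm (a::w) && true); rewrite hu.
move=> /andP [ha hw] /andP [hb hw'].
have hu : pos (a :: w) by rewrite /pos /= hw andbT (leq_trans _ ha).
have hv : pos (b :: w') by rewrite /pos /= hw' andbT (leq_trans _ hb).
change (allW adm (star_word (a::w) (b::w'))).
rewrite star_cons /addH !allW_cat !allW_scale !allW_lcons.
apply/and4P; split.
- by apply: (allW_impl _ (star_pos hw hv)) => x hx /=; rewrite ha.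
- by apply: (allW_impl _ (star_pos hu hw')) => x hx /=; rewrite hb.
- by apply: (allW_impl _ (star_pos hw hw')) => x hx; apply/andP; split; [by rewrite (leq_trans ha) // leq_addr | exact: hx].
- apply: allW_circ. apply: (allW_impl _ (star_pos hw hw')) => -[|l x] // /andP [_ hx].
  apply/andP; split; last exact: hx. by rewrite (leq_trans ha) // -addnA leq_addr.
Qed.

Lemma coefH_flatten L w : coefH (flatten L) w = \sum_(x <- L) coefH x w.
Proof. by rewrite /coefH big_flatten. Qed.
Lemma coefH_scale a X w : coefH (scaleH a X) w = a * coefH X w.
Proof. by rewrite /coefH big_map big_distrr. Qed.

Lemma coefH_St u w : coefH (St u) w = \sum_(p <- u) p.1 * coefH (St_word p.2) w.
Proof. rewrite /St coefH_flatten big_map. apply: eq_bigr => p _. by rewrite coefH_scale. Qed.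

Lemma St_inh0 u : inh0 u -> inh0 (St u).
Proof.
move=> hu w nw. rewrite coefH_St.
rewrite (@sum_coef_eq _ (fun a w' => a * coefH (St_word w') w) _ _ u (fadm u) (coef_fadm hu)); first last.
- by move=> a b w'; rewrite mulrDl.
- by move=> w'; rewrite mul0r.
rewrite big_seq big1 // => p. rewrite /fadm mem_filter => /andP [hp _].
by rewrite (allA_inh0 (St_adm hp)) ?mulr0.
Qed.

Lemma coefH_starH u v w : coefH (starH u v) w =
  \sum_(p <- u) \sum_(q <- v) (p.1 * q.1) * coefH (star_word p.2 q.2) w.
Proof.
rewrite /starH coefH_flatten big_map. apply: eq_bigr => p _.
rewrite coefH_flatten big_map. apply: eq_bigr => q _. by rewrite coefH_scale.
Qed.

Lemma starH_inh0 u v : inh0 u -> inh0 v -> inh0 (starH u v).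
Proof.
move=> hu hv w nw. rewrite coefH_starH.
rewrite (@sum_coef_eq _ (fun a w1 => \sum_(q <- v) (a * q.1) * coefH (star_word w1 q.2) w) _ _ u (fadm u) (coef_fadm hu)); first last.
- by move=> a b w1; rewrite -big_split; apply: eq_bigr => q _; rewrite !mulrDl.
- by move=> w1; rewrite big1 // => q _; rewrite !mul0r.
rewrite big_seq big1 // => p. rewrite /fadm mem_filter => /andP [hp _].
rewrite (@sum_coef_eq _ (fun b w2 => (p.1 * b) * coefH (star_word p.2 w2) w) _ _ v (fadm v) (coef_fadm hv)); first last.
- by move=> a b w1; rewrite mulrDr mulrDl.
- by move=> w1; rewrite mulr0 mul0r.
rewrite big_seq big1 // => q. rewrite /fadm mem_filter => /andP [hq _].
by rewrite (allA_inh0 (star_adm hp hq)) ?mulr0.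
Qed.

Lemma pos_Forall w : pos w -> List.Forall (fun l => (1 <= l)%coq_nat) w.
Proof.
elim: w => [|l w IH] /=; first by constructor.
move=> /andP [hl hw]. constructor; [exact/leP | exact: IH].
Qed.

Lemma adm_cv w : adm w -> Un_cv (zeta_tr w) (mzv w).
Proof.
case: w => [|k w]; first by move=> _; exact: zeta_cv_nil.
move=> /andP [hk hw]. apply: zeta_cv; [exact/leP | exact: pos_Forall].
Qed.

Lemma Un_cv_ext (f g : nat -> R) l : (forall N, f N = g N) -> Un_cv f l -> Un_cv g l.
Proof. move=> e h eps he. have [N hN] := h eps he. exists N => n hn. rewrite -e. exact: hN. Qed.

Lemma cv_const (a : R) : Un_cv (fun _ => a) a.
Proof. move=> eps he. exists 0%nat => n _. rewrite /R_dist Rminus_diag Rabs_R0. exact: he. Qed.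

Lemma cv_sum (I : Type) (s : seq I) (F : I -> nat -> R) (L : I -> R) :
  (forall i, Un_cv (F i) (L i)) -> Un_cv (fun N => \sum_(i <- s) F i N) (\sum_(i <- s) L i).
Proof.
move=> h. elim: s => [|i s IH].
  apply: (Un_cv_ext (f := fun _ => 0)); first by move=> N; rewrite big_nil.
  rewrite big_nil. exact: cv_const.
apply: (Un_cv_ext (f := fun N => F i N + \sum_(j <- s) F j N)); first by move=> N; rewrite big_cons.
rewrite big_cons. exact: CV_plus.
Qed.

Lemma ZNP_fadm u N : inh0 u -> ZNP u N = ZNP (fadm u) N.
Proof.
move=> hu. rewrite /ZNP (@sum_coef_eq _ (fun a w => mp a * (zeta_tr w N)%:P) _ _ u (fadm u) (coef_fadm hu)) //.
- by move=> w; rewrite /mp rmorph0 mul0r.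
- by move=> a b w; rewrite /mp rmorphD mulrDl.
Qed.

Lemma ZP_fadm u : inh0 u -> ZP u = ZP (fadm u).
Proof.
move=> hu. rewrite /ZP (@sum_coef_eq _ (fun a w => mp a * (mzv w)%:P) _ _ u (fadm u) (coef_fadm hu)) //.
- by move=> w; rewrite /mp rmorph0 mul0r.
- by move=> a b w; rewrite /mp rmorphD mulrDl.
Qed.

Lemma ZNP_cv_allA u n : allA u -> Un_cv (fun N => (ZNP u N)`_n) ((ZP u)`_n).
Proof.
elim: u => [|p u IH].
  move=> _. apply: (Un_cv_ext (f := fun _ => 0)); first by move=> N; rewrite /ZNP big_nil coef0.
  rewrite /ZP big_nil coef0. exact: cv_const.
move=> /andP [hp hu].
apply: (Un_cv_ext (f := fun N => (mp p.1)`_n * zeta_tr p.2 N + (ZNP u N)`_n)).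
  by move=> N; rewrite /ZNP big_cons coefD coefMC.
rewrite /ZP big_cons coefD coefMC -/(ZP u). apply: CV_plus; last exact: IH.
apply: (Un_cv_ext (f := fun N => (fun _ => (mp p.1)`_n) N * zeta_tr p.2 N)) => //.
apply: CV_mult; [exact: cv_const | exact: adm_cv].
Qed.

Lemma Zt_cv X n : inh0 X -> Un_cv (fun N => (Phi X N)`_n) (Zt X n).
Proof.
move=> hX. have hS := St_inh0 hX. rewrite Zt_E /Phi.
apply: (Un_cv_ext (f := fun N => (ZNP (fadm (St X)) N)`_n)); first by move=> N; rewrite -ZNP_fadm.
rewrite (ZP_fadm hS). apply: ZNP_cv_allA. exact: fadm_allA.
Qed.

Lemma part2 u v : inh0 u -> inh0 v -> forall n, Zt (starH u v) n = Rtmul (Zt u) (Zt v) n.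
Proof.
move=> hu hv n.
apply: (UL_sequence (fun N => (Phi (starH u v) N)`_n)); first exact: Zt_cv (starH_inh0 hu hv).
rewrite /Rtmul sum_f_R0_big.
apply: (Un_cv_ext (f := fun N => \sum_(j < n.+1) (Phi u N)`_j * (Phi v N)`_(n - j))).
  by move=> N; rewrite Phi_starH coefM.
apply: (@cv_sum _ (index_enum 'I_n.+1) (fun (j : 'I_n.+1) N => (Phi u N)`_j * (Phi v N)`_(subn n j)) (fun (j : 'I_n.+1) => Zt u j * Zt v (subn n j))) => j.
exact: CV_mult (Zt_cv _ hu) (Zt_cv _ hv).
Qed.

Theorem mainTheorem8 :
  (forall u v : H, inh0 u -> inh0 v -> inh0 (starH u v)) /\
  (forall u v : H, inh0 u -> inh0 v ->
     forall n, Zt (starH u v) n = Rtmul (Zt u) (Zt v) n) /\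
  (forall n, Zt oneH n = Rt1 n) /\
  (forall (a b : Qt) (u v : H), inh0 u -> inh0 v ->
     forall n, Zt (addH (scaleH a u) (scaleH b v)) n
               = Rtadd (Rtmul (QtR a) (Zt u)) (Rtmul (QtR b) (Zt v)) n).
Proof.
split; first exact: starH_inh0.
split; first exact: part2.
split; first exact: part3.
by move=> a b u v _ _ n; apply: part4.
Qed.
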